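(* Let $k\ge 1$ and let $\Gamma\subset\mathbb{R}_+^k$ be a nonempty compact set of possible allocations. Let $X$ be a random valuation with values in $\mathbb{R}_+^k$ and finite expectation, i.e., $\mathbb{E}[\|X\|]<\infty$. Then there exists an incentive compatible and individually rational $\Gamma$-mechanism $\mu=(q,s)$ such that $R(\mu;X)=\textsc{Rev}_\Gamma(X)$.
   Context: A $\Gamma$-mechanism $\mu=(q,s)$ consists of an allocation function $q:\mathbb{R}_+^k\to\Gamma$ and a payment function $s:\mathbb{R}_+^k\to\mathbb{R}$. It is incentive compatible (IC) if $q(x)\cdot x-s(x)\ge q(y)\cdot x-s(y)$ for all $x,y\in\mathbb{R}_+^k$, and individually rational (IR) if $q(x)\cdot x-s(x)\ge 0$ for all $x\in\mathbb{R}_+^k$. The revenue of $\mu$ from $X$ is $R(\mu;X):=\mathbb{E}[s(X)]$, and $\textsc{Rev}_\Gamma(X):=\sup_\mu R(\mu;X)$, the supremum over all IC and IR $\Gamma$-mechanisms. *)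

(* Defs.v *)
From HB Require Import structures.
From mathcomp Require Import all_boot all_order all_algebra.
From mathcomp Require Import all_classical all_reals all_analysis.
Set Implicit Arguments. Unset Strict Implicit. Unset Printing Implicit Defensive.
Import Order.TTheory GRing.Theory Num.Theory.
Import numFieldNormedType.Exports.
Local Open Scope classical_set_scope.
Local Open Scope ring_scope.

Definition nonneg_vec {R : realType} {k : nat} (x : 'rV[R]_k) : Prop :=
  forall i : 'I_k, 0 <= x ord0 i.

Definition dotv {R : realType} {k : nat} (a x : 'rV[R]_k) : R :=
  \sum_(i < k) a ord0 i * x ord0 i.

Definition is_Gamma_alloc {R : realType} {k : nat} (Gamma : set 'rV[R]_k)
  (q : 'rV[R]_k -> 'rV[R]_k) : Prop :=
  forall x, nonneg_vec x -> Gamma (q x).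

Definition IC {R : realType} {k : nat}
  (q : 'rV[R]_k -> 'rV[R]_k) (s : 'rV[R]_k -> R) : Prop :=
  forall x y, nonneg_vec x -> nonneg_vec y ->
    dotv (q y) x - s y <= dotv (q x) x - s x.

Definition IR {R : realType} {k : nat}
  (q : 'rV[R]_k -> 'rV[R]_k) (s : 'rV[R]_k -> R) : Prop :=
  forall x, nonneg_vec x -> 0 <= dotv (q x) x - s x.

Definition revenue {R : realType} {k : nat} {d : measure_display}
  {Omega : measurableType d} (P : probability Omega R)
  (X : Omega -> 'rV[R]_k) (s : 'rV[R]_k -> R) : \bar R :=
  (\int[P]_w (s (X w))%:E)%E.

(* IC and IR Gamma-mechanisms whose revenue E[s(X)] is well defined
   (s(X) measurable). *)
Definition admissible {R : realType} {k : nat} {d : measure_display}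
  {Omega : measurableType d} (Gamma : set 'rV[R]_k)
  (X : Omega -> 'rV[R]_k)
  (q : 'rV[R]_k -> 'rV[R]_k) (s : 'rV[R]_k -> R) : Prop :=
  [/\ is_Gamma_alloc Gamma q, IC q s, IR q s &
      measurable_fun [set: Omega] (fun w => s (X w))].

Definition Rev {R : realType} {k : nat} {d : measure_display}
  {Omega : measurableType d} (Gamma : set 'rV[R]_k)
  (P : probability Omega R) (X : Omega -> 'rV[R]_k) : \bar R :=
  ereal_sup [set revenue P X s | s in
              [set s | exists q, admissible Gamma X q s]].

(* Main.v *)
Require Import Defs.
From HB Require Import structures.
From mathcomp Require Import all_boot all_order all_algebra.
From mathcomp Require Import all_classical all_reals all_analysis.
From mathcomp Require Import ring lra.
From mathcomp Require Import measurable_realfun.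
Import Order.TTheory GRing.Theory Num.Theory.
Import numFieldNormedType.Exports.
Local Open Scope classical_set_scope.
Local Open Scope ring_scope.
Section basics.
Variables (R : realType) (k : nat).
Implicit Types (a x y v g : 'rV[R]_k).

Lemma dotvBr a x y : dotv a (x - y) = dotv a x - dotv a y.
Proof.
rewrite /dotv -sumrB; apply: eq_bigr => i _; by rewrite !mxE mulrBr.
Qed.

Lemma dotvBl a g x : dotv (a - g) x = dotv a x - dotv g x.
Proof.
rewrite /dotv -sumrB; apply: eq_bigr => i _; by rewrite !mxE mulrBl.
Qed.

Lemma dotv0r a : dotv a 0 = 0.
Proof. rewrite /dotv big1 // => i _; by rewrite mxE mulr0. Qed.

Lemma dotvNr a x : dotv a (- x) = - dotv a x.
Proof. by rewrite -sub0r dotvBr dotv0r sub0r. Qed.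

Lemma dotv_ge0 a x : nonneg_vec a -> nonneg_vec x -> 0 <= dotv a x.
Proof. move=> ha hx; apply: sumr_ge0 => i _; exact: mulr_ge0. Qed.

Lemma coord_le_norm x i : `|x ord0 i| <= `|x|.
Proof.
have /mapP[j Hj ->] : `|x ord0 i| \in [seq `|x y.1 y.2| | y : 'I_1 * 'I_k].
  by apply/mapP; exists (ord0, i) => //=; rewrite mem_enum.
by rewrite [leRHS]/Num.norm /= mx_normrE; apply/bigmax_geP; right => /=; exists j.
Qed.

Lemma norm_le_coord x e : 0 <= e -> (forall i, `|x ord0 i| <= e) -> `|x| <= e.
Proof.
move=> e0 he; rewrite [leLHS]/Num.norm /= mx_normrE; apply/bigmax_leP; split => //.
by move=> [i j] _ /=; rewrite (ord1 i); exact: he.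
Qed.

Lemma dotv_bound a v B : (forall i, `|a ord0 i| <= B) ->
  `|dotv a v| <= B * k%:R * `|v|.
Proof.
move=> hB; rewrite /dotv (le_trans (ler_norm_sum _ _ _)) //.
have -> : B * k%:R * `|v| = \sum_(i < k) (B * `|v|).
  by rewrite sumr_const card_ord -[in RHS]mulr_natr mulrAC.
apply: ler_sum => i _; rewrite normrM; apply: ler_pM => //.
exact: coord_le_norm.
Qed.

Lemma cluster_dot (c : nat -> 'rV[R]_k) g v r :
  cluster (c @ \oo) g -> (\forall i \near \oo, dotv (c i) v <= r) ->
  dotv g v <= r.
Proof.
move=> cl ev; rewrite leNgt; apply/negP => hlt.
pose del := (dotv g v - r) / (k%:R * `|v| + 1).
have hden : 0 < k%:R * `|v| + 1 by rewrite ltr_wpDl // mulr_ge0.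
have del0 : 0 < del by rewrite divr_gt0 // subr_gt0.
have [g' [/= hg' hb]] := cl [set g' | dotv g' v <= r] _ ev (nbhsx_ballx g _ del0).
move: hb; rewrite -ball_normE /= => hb.
have : dotv g v - dotv g' v <= del * k%:R * `|v|.
  rewrite -dotvBl; apply: le_trans (ler_norm _) _; apply: dotv_bound => i.
  by apply: le_trans (coord_le_norm _ _) (ltW hb).
have e1 : del * (k%:R * `|v| + 1) = dotv g v - r.
  by rewrite /del divfK // lt0r_neq0.
rewrite mulrDr mulr1 mulrA in e1.
move=> h; lra.
Qed.

End basics.
Lemma incr_ge (f : nat -> nat) : increasing_seq f -> forall n, (n <= f n)%N.
Proof.
move=> hf; elim=> [//|n IH].
have : (f n < f n.+1)%N.
  have := hf n.+1 n; rewrite leEnat => h; by rewrite ltnNge h ltnn.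
by move=> h; exact: leq_ltn_trans IH h.
Qed.

Lemma cvg_subseq_ge (R : realType) (b : nat -> R) (tau : nat -> nat) (m : nat) :
  cvgn b -> (forall j, (m <= j)%N -> (j <= tau j)%N) ->
  b \o tau @ \oo --> limn b.
Proof.
move=> cb ht; apply/cvgrPdist_le => e e0.
have := (cvgrPdist_le _ _).1 cb e e0 => -[N _ HN].
exists (maxn m N) => // j /= hj.
apply: HN => /=; apply: leq_trans (ht j _); first by apply: leq_trans hj; exact: leq_maxr.
by apply: leq_trans hj; exact: leq_maxl.
Qed.

Lemma diagonal (R : realType) (a : nat -> nat -> R) :
  (forall m, exists B : R, forall n, `|a m n| <= B) ->
  exists phi : nat -> nat, (forall j, (j <= phi j)%N) /\ forall m, cvgn (a m \o phi).
Proof.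
move=> hb.
have hsel : forall mf : nat * (nat -> nat), exists g : nat -> nat,
    (forall n, (n <= g n)%N) /\ cvgn (a mf.1 \o mf.2 \o g).
  move=> [m f] /=.
  have [B hB] := hb m.
  have bf : bounded_fun (a m \o f).
    exists B; split; first by rewrite num_real.
    move=> M hM x _ /=; apply: le_trans (hB _) (ltW hM).
  have [g hg cg] := bolzano_weierstrass bf.
  by exists g; split => //; exact: incr_ge.
have [sel Hsel] := choice hsel.
pose fix Phi m := match m with
  | 0 => sel (0%N, id)
  | m'.+1 => Phi m' \o sel (m'.+1, Phi m')
  end.
have PhiS m : Phi m.+1 = Phi m \o sel (m.+1, Phi m) by [].
have Phige m n : (n <= Phi m n)%N.
  elim: m n => [|m IH] n; first exact: (Hsel (0%N, id)).1.
  rewrite PhiS /=; apply: leq_trans (IH _); exact: (Hsel (m.+1, Phi m)).1.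
have Phicvg m : cvgn (a m \o Phi m).
  case: m => [|m]; first exact: (Hsel (0%N, id)).2.
  rewrite PhiS; exact: (Hsel (m.+1, Phi m)).2.
have Phifac m j : (m <= j)%N -> exists rho : nat -> nat,
    (forall n, (n <= rho n)%N) /\ forall n, Phi j n = Phi m (rho n).
  elim: j => [|j IH].
    by rewrite leqn0 => /eqP ->; exists id.
  rewrite leq_eqVlt => /orP[/eqP <-|]; first by exists id.
  rewrite ltnS => /IH [rho [h1 h2]].
  exists (rho \o sel (j.+1, Phi j)); split.
    move=> n /=; apply: leq_trans (h1 _); exact: (Hsel (j.+1, Phi j)).1.
  by move=> n; rewrite PhiS /= h2.
exists (fun j => Phi j j); split; first by move=> j; exact: Phige.
move=> m.
have htau : forall j, exists t, (m <= j)%N -> (j <= t)%N /\ Phi j j = Phi m t.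
  move=> j; case: (leqP m j) => hmj; last by exists 0%N.
  have [rho [h1 h2]] := Phifac m j hmj.
  by exists (rho j) => _; split; [exact: h1| exact: h2].
have [tau Htau] := choice htau.
apply/cvg_ex; exists (limn (a m \o Phi m)).
have := @cvg_subseq_ge _ _ tau m (Phicvg m) (fun j hj => (Htau j hj).1).
apply: cvg_trans; apply: near_eq_cvg; near=> j.
by rewrite /= (Htau j _).2 //; near: j; exists m.
Unshelve. all: by end_near.
Qed.

Section mech.
Variables (R : realType) (k : nat) (Gamma : set 'rV[R]_k) (K : R).
Hypothesis hK : forall g x, Gamma g -> `|dotv g x| <= K * `|x|.
Variables (q : 'rV[R]_k -> 'rV[R]_k) (s : 'rV[R]_k -> R).
Hypotheses (hG : is_Gamma_alloc Gamma q) (hIC : IC q s) (hIR : IR q s) (hs0 : s 0 = 0).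
Let u x := dotv (q x) x - s x.

Lemma nonneg0 : nonneg_vec (0 : 'rV[R]_k).
Proof. by move=> i; rewrite mxE. Qed.

Lemma mech_u0 : u 0 = 0.
Proof. by rewrite /u dotv0r hs0 subrr. Qed.

Lemma mech_sub x y : nonneg_vec x -> nonneg_vec y ->
  u y + dotv (q y) (x - y) <= u x.
Proof.
move=> hx hy; have := hIC _ _ hx hy; rewrite /u dotvBr.
by rewrite addrAC addrCA subrr addr0 addrC.
Qed.

Lemma mech_s_ge0 x : nonneg_vec x -> 0 <= s x.
Proof.
move=> hx; have := hIC _ _ nonneg0 hx; rewrite dotv0r hs0 dotv0r !subr0 sub0r.
by rewrite oppr_le0.
Qed.

Lemma mech_u_ge0 x : nonneg_vec x -> 0 <= u x.
Proof. exact: hIR. Qed.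

Lemma mech_s_le x : nonneg_vec x -> s x <= K * `|x|.
Proof.
move=> hx; have := hIR _ hx; rewrite subr_ge0 => h; apply: le_trans h _.
exact: le_trans (ler_norm _) (hK _ _ (hG _ hx)).
Qed.

Lemma mech_lip x y : nonneg_vec x -> nonneg_vec y -> `|u x - u y| <= K * `|x - y|.
Proof.
move=> hx hy; have h1 := mech_sub _ _ hx hy; have h2 := mech_sub _ _ hy hx.
have b1 := hK _ (y - x) (hG _ hx); have b2 := hK _ (x - y) (hG _ hy).
rewrite distrC in b1.
move: b1 b2; rewrite !ler_norml => /andP[? ?] /andP[? ?]; apply/andP; split; lra.
Qed.

Lemma mech_u_le x : nonneg_vec x -> u x <= K * `|x|.
Proof.
move=> hx; have := mech_lip _ _ hx nonneg0; rewrite mech_u0 subr0 ger0_norm ?mech_u_ge0 //.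
by rewrite subr0.
Qed.

End mech.

Lemma le_integral_meas d (T : measurableType d) (R : realType)
  (mu : {measure set T -> \bar R}) (D : set T) (mD : measurable D)
  (f g : T -> \bar R) : measurable_fun D f -> measurable_fun D g ->
  (forall x, D x -> (f x <= g x)%E) ->
  (\int[mu]_(x in D) f x <= \int[mu]_(x in D) g x)%E.
Proof.
move=> mf mg fg; rewrite (integralE _ _ f) (integralE _ _ g).
apply: leeB.
- apply: (ge0_le_integral mu mD).
  + by move=> x _; exact: funepos_ge0.
  + exact: measurable_funepos.
  + exact: measurable_funepos.
  + move=> x Dx; apply: (@funepos_le _ _ D); last by rewrite inE.
    by move=> y; rewrite inE; exact: fg.
- apply: (ge0_le_integral mu mD).
  + by move=> x _; exact: funeneg_ge0.
  + exact: measurable_funeneg.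
  + exact: measurable_funeneg.
  + move=> x Dx; apply: (@funeneg_le _ _ D); last by rewrite inE.
    by move=> y; rewrite inE; exact: fg.
Qed.

Lemma cluster_dot_lim (R : realType) (k : nat) (c : nat -> 'rV[R]_k) g v
  (a : nat -> R) l :
  cluster (c @ \oo) g -> (forall i, dotv (c i) v <= a i) -> a @ \oo --> l ->
  dotv g v <= l.
Proof.
move=> cl ca al; apply/ler_addgt0Pr => e e0.
apply: (@cluster_dot R k c g v (l + e) cl); near=> i; apply: le_trans (ca i) _; apply: ltW.
by near: i; apply: cvgr_lt al _ _; rewrite ltrDl.
Unshelve. all: by end_near.
Qed.

Theorem theorem1 (R : realType) (k : nat) (hk : (0 < k)%N)
  (Gamma : set 'rV[R]_k)
  (hGne : Gamma !=set0) (hGc : compact Gamma)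
  (hGpos : forall g, Gamma g -> nonneg_vec g)
  (d : measure_display) (Omega : measurableType d)
  (P : probability Omega R) (X : Omega -> 'rV[R]_k)
  (hXmeas : forall i : 'I_k, measurable_fun [set: Omega] (fun w => X w ord0 i))
  (hXpos : forall w, nonneg_vec (X w))
  (hXint : P.-integrable [set: Omega] (fun w => (`|X w|)%:E)) :
  exists (q : 'rV[R]_k -> 'rV[R]_k) (s : 'rV[R]_k -> R),
    admissible Gamma X q s /\ revenue P X s = Rev Gamma P X.
Proof.
have [g0 Gg0] := hGne.
have [B [B0 hB]] : exists B : R, 0 <= B /\ forall g, Gamma g -> forall i, `|g ord0 i| <= B.
  have [M [_ HM]] := compact_bounded hGc.
  have := HM (M + 1); rewrite ltrDl ltr01 => /(_ isT) HM1.
  exists (M + 1); split.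
    by apply: le_trans (HM1 _ Gg0); exact: normr_ge0.
  move=> g Gg i; have := HM1 _ Gg; have := coord_le_norm _ _ g i; move=> h1 h2; exact: le_trans h1 h2.
pose K := B * k%:R.
have K0 : 0 <= K by rewrite mulr_ge0.
have hK : forall g x, Gamma g -> `|dotv g x| <= K * `|x|.
  by move=> g x Gg; apply: dotv_bound; exact: hB.
pose h := fun w => (K%:E * (`|X w|)%:E)%E.
have ih : P.-integrable [set: Omega] h by exact: integrableZl.
have hfin : (\int[P]_w h w)%E \is a fin_num by exact: integrable_fin_num.
pose NA q s := admissible Gamma X q s /\ s 0 = 0.
have norm_step : forall q s, admissible Gamma X q s ->
    NA q (fun x => s x - s 0) /\ (revenue P X s <= revenue P X (fun x => (s x - s 0)%R))%E.
  move=> q s [hG hIC hIR hm].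
  have nn0 := nonneg0 R k.
  have s00 : s 0 <= 0.
    by have := hIR 0 nn0; rewrite dotv0r sub0r oppr_ge0.
  split; first split; first split.
  - exact: hG.
  - move=> x y hx hy /=; have := hIC x y hx hy; lra.
  - move=> x hx /=; have := hIC x 0 hx nn0.
    have := @dotv_ge0 _ _ _ _ (hGpos _ (hG _ nn0)) hx; lra.
  - exact: measurable_funB hm (measurable_cst _).
  - by rewrite subrr.
  - rewrite /revenue; apply: (@le_integral_meas _ _ _ P setT measurableT).
    + exact/measurable_EFinP.
    + exact/measurable_EFinP/measurable_funB.
    + move=> w _; rewrite lee_fin; lra.
have rev_le : forall q s, NA q s -> (revenue P X s <= (\int[P]_w h w)%E)%E.
  move=> q s [[hG hIC hIR hm] hs0]; rewrite /revenue.
  apply: (@le_integral_meas _ _ _ P setT measurableT).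
  + exact/measurable_EFinP.
  + exact: measurable_int ih.
  + move=> w _; rewrite /h -EFinM lee_fin.
    exact: (@mech_s_le _ _ _ _ hK _ _ hG hIR (X w) (hXpos w)).
have Rev_ge0 : (0 <= Rev Gamma P X)%E.
  apply: ereal_sup_ubound; exists (fun _ => 0%R).
    exists (fun _ => g0); split.
    - by move=> x _.
    - by move=> x y _ _; rewrite lexx.
    - move=> x hx; rewrite subr0; exact: (@dotv_ge0 _ _ _ _ (hGpos _ Gg0) hx).
    - exact: measurable_cst.
  by rewrite /revenue integral0.
have Rev_le : (Rev Gamma P X <= (\int[P]_w h w)%E)%E.
  apply: ub_ereal_sup => _ [s [q hq] <-].
  apply: le_trans (norm_step q s hq).2 _; apply: rev_le; exact: (norm_step q s hq).1.
have [rv Rv] : exists rv : R, Rev Gamma P X = rv%:E.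
  exists (fine (Rev Gamma P X)); rewrite fineK // fin_numElt; apply/andP; split.
    exact: lt_le_trans Rev_ge0.
  apply: le_lt_trans Rev_le _; by move: hfin; rewrite fin_numElt => /andP[].
have approx : forall n : nat, exists qs : ('rV[R]_k -> 'rV[R]_k) * ('rV[R]_k -> R),
    NA qs.1 qs.2 /\ ((rv - n.+1%:R^-1)%R%:E <= revenue P X qs.2)%E.
  move=> n.
  have : ((rv - n.+1%:R^-1)%R%:E < Rev Gamma P X)%E.
    by rewrite Rv lte_fin ltrBlDr ltrDl invr_gt0 ltr0n.
  move=> /ereal_sup_gt [_ [s [q hq] <-]] hlt.
  have [hna hle] := norm_step q s hq.
  exists (q, fun x => (s x - s 0)%R); split => //=.
  exact: le_trans (ltW hlt) hle.
have [qs Hqs] := choice approx.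
pose qn n := (qs n).1.
pose sn n := (qs n).2.
pose un n x := dotv (qn n x) x - sn n x.
have NAn : forall n, NA (qn n) (sn n) by move=> n; exact: (Hqs n).1.
have hun0 : forall n x, nonneg_vec x -> 0 <= un n x.
  by move=> n x hx; have [[hG hIC hIR hm] hs0] := NAn n; exact: (@mech_u_ge0 _ _ _ _ hIR x hx).
have hunK : forall n x, nonneg_vec x -> un n x <= K * `|x|.
  by move=> n x hx; have [[hG hIC hIR hm] hs0] := NAn n; exact: (@mech_u_le _ _ _ _ hK _ _ hG hIC hIR hs0 x hx).
have hsn0 : forall n x, nonneg_vec x -> 0 <= sn n x.
  by move=> n x hx; have [[hG hIC hIR hm] hs0] := NAn n; exact: (@mech_s_ge0 _ _ _ _ hIC hs0 x hx).
have hsnK : forall n x, nonneg_vec x -> sn n x <= K * `|x|.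
  by move=> n x hx; have [[hG hIC hIR hm] hs0] := NAn n; exact: (@mech_s_le _ _ _ _ hK _ _ hG hIR x hx).
have hlip : forall n x y, nonneg_vec x -> nonneg_vec y -> `|un n x - un n y| <= K * `|x - y|.
  by move=> n x y hx hy; have [[hG hIC hIR hm] hs0] := NAn n; exact: (@mech_lip _ _ _ _ hK _ _ hG hIC x y hx hy).
have hsub : forall n x y, nonneg_vec x -> nonneg_vec y -> un n y + dotv (qn n y) (x - y) <= un n x.
  by move=> n x y hx hy; have [[hG hIC hIR hm] hs0] := NAn n; exact: (@mech_sub _ _ _ _ hIC x y hx hy).
have hqG : forall n x, nonneg_vec x -> Gamma (qn n x).
  by move=> n x hx; have [[hG hIC hIR hm] hs0] := NAn n; exact: hG.
have hsm : forall n, measurable_fun [set: Omega] (fun w => sn n (X w)).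
  by move=> n; have [[? ? ? ?] ?] := NAn n.
have [dd [ddnn ddense]] : exists dd : nat -> 'rV[R]_k, (forall m, nonneg_vec (dd m)) /\
    forall x, nonneg_vec x -> forall e, 0 < e -> exists m, `|x - dd m| <= e.
  pose dd m : 'rV[R]_k := oapp (fun r : 'rV[rat]_k =>
    \row_i (ratr (Num.max (r ord0 i) 0) : R)) 0 (unpickle m).
  exists dd; split.
    move=> m i; rewrite /dd; case: (unpickle m) => [r|] /=; rewrite mxE //.
    by rewrite ler0q le_max lexx orbT.
  move=> x hx e e0.
  have hr : forall i : 'I_k, exists r : rat, ratr r \in `]x ord0 i, x ord0 i + e[.
    by move=> i; apply: rat_in_itvoo; rewrite ltrDl.
  have [rr Hrr] := choice hr.
  exists (pickle (\row_i rr i : 'rV[rat]_k)).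
  rewrite /dd pickleK /=.
  apply: norm_le_coord; first exact: ltW.
  move=> i; rewrite !mxE.
  have := Hrr i; rewrite in_itv /= => /andP[h1 h2].
  have rpos : 0 < rr i by rewrite -(ltr0q R); apply: le_lt_trans (hx i) h1.
  have -> : Num.max (rr i) 0 = rr i by apply/max_idPl; exact: ltW.
  have := hx i; rewrite ler_norml; move=> hxi; apply/andP; split; lra.
have hbd : forall m, exists B1 : R, forall n, `|un n (dd m)| <= B1.
  by move=> m; exists (K * `|dd m|) => n; rewrite ger0_norm ?hun0 ?hunK.
have [phi [phige phicvg]] := @diagonal R (fun m n => un n (dd m)) hbd.
have ucvg : forall x, nonneg_vec x -> cvgn (fun j => un (phi j) x).
  move=> x hx.
  pose v j := un (phi j) x.
  have bv : bounded_fun v.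
    exists (K * `|x|); split; first by rewrite num_real.
    move=> M hM j _ /=; rewrite ger0_norm ?hun0 //.
    apply: le_trans (ltW hM); exact: hunK.
  have [sig hsig /cvg_ex [l hl]] := bolzano_weierstrass bv.
  apply/cvg_ex; exists l; apply/cvgrPdist_le => e e0.
  pose del := e / 8 / (K + 1).
  have K1 : 0 < K + 1 by rewrite ltr_wpDl.
  have del0 : 0 < del by rewrite divr_gt0 // divr_gt0.
  have Edel : del * (K + 1) = e / 8 by rewrite /del divfK // lt0r_neq0.
  have [m hm] := ddense x hx del del0.
  have lipd : forall n, `|un n x - un n (dd m)| <= K * del.
    move=> n; apply: le_trans (hlip n x (dd m) hx (ddnn m)) _.
    exact: ler_wpM2l.
  have wcvg := phicvg m.
  have e4 : 0 < e / 4 by rewrite divr_gt0.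
  have [N1 _ HN1] := (cvgrPdist_le _ _).1 wcvg _ e4.
  have [N2 _ HN2] := (cvgrPdist_le _ _).1 hl _ e4.
  exists N1 => // j /= hj.
  pose i := maxn N1 N2.
  have hi1 : (N1 <= sig i)%N.
    exact: leq_trans (leq_maxl N1 N2) (incr_ge _ hsig i).
  have hi2 : (N2 <= i)%N by exact: leq_maxr.
  have a1 := HN1 j hj; have a2 := HN1 (sig i) hi1; have a3 := HN2 i hi2.
  have b1 := lipd (phi j); have b2 := lipd (phi (sig i)).
  move: a1 a2 a3 b1 b2; rewrite /v /= !ler_norml.
  move=> /andP[? ?] /andP[? ?] /andP[? ?] /andP[? ?] /andP[? ?].
  have : 0 <= del by exact: ltW.
  move=> ?; apply/andP; split; lra.
pose U x := limn (fun j => un (phi j) x).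
pose S x := limn_sup (fun j => sn (phi j) x).
have Sbd : forall x, nonneg_vec x -> bounded_fun (fun j => sn (phi j) x).
  move=> x hx; exists (K * `|x|); split; first by rewrite num_real.
  move=> M hM j _ /=; rewrite ger0_norm ?hsn0 //.
  apply: le_trans (ltW hM); exact: hsnK.
have key : forall x, exists g, nonneg_vec x -> [/\ Gamma g, dotv g x = S x + U x &
    forall y, nonneg_vec y -> U x + dotv g (y - x) <= U y].
  move=> x.
  case: (pselect (nonneg_vec x)) => hx; last by exists g0.
  pose b j := sn (phi j) x.
  have bb : bounded_fun b := Sbd x hx.
  have hsup : sups b @ \oo --> S x.
    rewrite /S -/b limn_supE //.
    exact: cvg_sups_inf (bounded_fun_has_ubound bb) (bounded_fun_has_lbound bb).
  have Sle : forall n, S x <= sups b n.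
    move=> n; rewrite /S -/b limn_supE //.
    by apply: ge_inf; [exact: bounded_fun_has_lbound_sups | exists n].
  have clS : cluster (b @ \oo) (S x).
    apply/cluster_eventuallyP => e n e0.
    have := cvgr_lt _ hsup (S x + e); rewrite ltrDl e0 => /(_ _ isT) [N0 _ HN0].
    pose n' := maxn n N0.
    have ub' := has_ubound_sdrop (bounded_fun_has_ubound bb) n'.
    have : S x - e < sup (sdrop b n').
      by apply: lt_le_trans (Sle n'); rewrite ltrBlDr ltrDl.
    have ne : sdrop b n' !=set0 by exists (b n'); exists n' => /=.
    move=> /(sup_gt ne) [_ [p /= hp <-] hlt].
    exists p; first exact: leq_trans (leq_maxl n N0) hp.
    have hbp : b p <= sups b n' by apply: (ub_le_sup ub'); exists p.
    have := HN0 n' (leq_maxr n N0).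
    move=> h2; rewrite ler_norml; apply/andP; split; rewrite /= in h2; lra.
  have [psi hpsi bpsi] := (cluster_eventually_cvg b (S x)).1 clS.
  pose c i := qn (phi (psi i)) x.
  have [g [Gg clg]] : Gamma `&` cluster (c @ \oo) !=set0.
    by apply: (hGc (c @ \oo)); exists 0%N => // i _; exact: hqG.
  have hu_psi : forall y, nonneg_vec y -> (fun i => un (phi (psi i)) y) @ \oo --> U y.
    move=> y hy.
    exact: (@cvg_subseq_ge R (fun j => un (phi j) y) psi 0 (ucvg y hy) (fun j _ => incr_ge _ hpsi j)).
  exists g => _; split => //.
  - apply/eqP; rewrite eq_le; apply/andP; split.
    + apply: (@cluster_dot_lim R k c g x _ _ clg _ (cvgD bpsi (hu_psi x hx))).
      by move=> i; rewrite /c /b /un !fctE /=; lra.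
    + have := @cluster_dot_lim R k c g (- x) _ _ clg _ (cvgN (cvgD bpsi (hu_psi x hx))).
      rewrite dotvNr; move=> hh; suff : - dotv g x <= - (S x + U x) by lra.
      apply: hh => i; rewrite dotvNr /c /b /un !fctE /=; lra.
  - move=> y hy.
    have hh2 := @cluster_dot_lim R k c g (y - x) _ _ clg _ (cvgB (hu_psi y hy) (hu_psi x hx)).
    suff : dotv g (y - x) <= U y - U x by lra.
    apply: hh2 => i; have := hsub (phi (psi i)) y x hy hx; rewrite /c !fctE /=; lra.
have [qf Hqf] := choice key.
have U0 : forall x, nonneg_vec x -> 0 <= U x.
  move=> x hx; apply: limr_ge; first exact: ucvg.
  by apply: nearW => j; exact: hun0.
have hSm : measurable_fun [set: Omega] (fun w => S (X w)).
  apply: (@measurable_fun_limn_sup _ _ _ setT (fun j w => sn (phi j) (X w))).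
  - by move=> w _; exact/bounded_fun_has_ubound/Sbd.
  - by move=> w _; exact/bounded_fun_has_lbound/Sbd.
  - by move=> n; exact: hsm.
have adm : admissible Gamma X qf S.
  split => //.
  - by move=> x hx; have [] := Hqf x hx.
  - move=> x y hx hy; have [_ ex _] := Hqf x hx; have [_ ey sy] := Hqf y hy.
    have := sy x hx; rewrite dotvBr; lra.
  - by move=> x hx; have [_ ex _] := Hqf x hx; rewrite ex addrC addKr; exact: U0.
exists qf, S; split => //.
apply/eqP; rewrite eq_le; apply/andP; split.
  by apply: ereal_sup_ubound; exists S => //; exists qf.
rewrite Rv /revenue.
pose fN N w := (sups (fun j => sn (phi j) (X w)) N)%:E.
have bdX : forall w, bounded_fun (fun j => sn (phi j) (X w)).
  by move=> w; exact: Sbd (hXpos w).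
have mfN : forall N, measurable_fun [set: Omega] (fN N).
  move=> N; apply/measurable_EFinP.
  apply: (@measurable_fun_sups _ _ _ setT (fun j w => sn (phi j) (X w))).
  - by move=> w _; exact/bounded_fun_has_ubound/bdX.
  - by move=> n; exact: hsm.
have mf : measurable_fun [set: Omega] (fun w => (S (X w))%:E).
  exact/measurable_EFinP.
have fNf : forall w, fN ^~ w @ \oo --> (S (X w))%:E.
  move=> w; apply: cvg_EFin; first exact: nearW.
  rewrite /S limn_supE //.
  exact: cvg_sups_inf (bounded_fun_has_ubound (bdX w)) (bounded_fun_has_lbound (bdX w)).
have supge : forall N w, sn (phi N) (X w) <= sups (fun j => sn (phi j) (X w)) N.
  move=> N w; apply: (ub_le_sup (has_ubound_sdrop (bounded_fun_has_ubound (bdX w)) N)).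
  by exists N => /=.
have fNg : forall N w, (`|fN N w| <= h w)%E.
  move=> N w; rewrite /fN /h -EFinM lee_fin.
  have h0 : 0 <= sups (fun j => sn (phi j) (X w)) N.
    exact: le_trans (hsn0 _ _ (hXpos w)) (supge N w).
  rewrite ger0_norm //; apply: ge_sup; first by exists (sn (phi N) (X w)); exists N => /=.
  by move=> _ [j /= _ <-]; exact: hsnK.
have [_ _ hdc] := @dominated_convergence _ _ _ P setT measurableT fN
  (fun w => (S (X w))%:E) h mfN mf (aeW _ (fun w _ => fNf w)) ih
  (aeW _ (fun w N _ => fNg N w)).
apply/lee_addgt0Pr => e e0.
rewrite -leeBlDr // -(cvg_lim _ hdc) // -EFinB.
apply: lime_ge; first by apply/cvg_ex; eexists; exact: hdc.
near=> N.
have hN : N.+1%:R^-1 < e by near: N; exact: (near_infty_natSinv_lt (PosNum e0)).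
apply: (@le_trans _ _ ((rv - (phi N).+1%:R^-1)%R%:E)) => /=.
  rewrite lee_fin lerB // ltW //; apply: le_lt_trans hN.
  rewrite lef_pV2 ?posrE ?ltr0n // ler_nat ltnS; exact: (phige N).
apply: le_trans (Hqs (phi N)).2 _.
apply: (@le_integral_meas _ _ _ P setT measurableT).
- by apply/measurable_EFinP; exact: hsm.
- exact: mfN.
- by move=> w _; rewrite /fN lee_fin; exact: supge.
Unshelve. all: by end_near.
Qed.
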